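(* Let $\mathcal{X}=\{x_1,\dots,x_N\}$ and $\mathcal{Y}=\{y_1,\dots,y_M\}$ be finite alphabets, $P_X$ a probability mass function on $\mathcal{X}$ with full support, and $U=(u_{ij})$ an $N\times M$ matrix whose $i$-th row is a permutation of $\{1,\dots,M\}$. Fix $h^*\in\{1,\dots,M\}$ and let $\mathcal{Y}^+(h^* )=\{y_j\in\mathcal{Y}:\exists i\in\{1,\dots,N\},\ u_{ij}\ge h^*\}$. Consider the optimization problem $$\min_{P_{Y|X}}\ \max_{y\in\mathcal{S}_Y}\ \ell_{P_{Y|X}\times P_X}(X\to y)$$ over all mechanisms $P_{Y|X}=(p_{ij})$ satisfying $p_{ij}=0$ whenever $u_{ij}<h^*$, together with the additional constraint $\mathcal{S}_Y=\mathcal{Y}^+(h^* )$. Then the mechanism $M^*(h^* )$ defined by $$[M^*(h^* )]_{ij}=\begin{cases}0 & \text{if } u_{ij}<h^*,\\ \frac{1}{M-h^*+1} & \text{otherwise},\end{cases}$$ is an optimal solution of this problem.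
   Context: A privacy mechanism is a conditional distribution $P_{Y|X}$, written as an $N\times M$ row-stochastic matrix with $p_{ij}=P_{Y|X=x_i}(y_j)$. With $P_Y(y)=\sum_x P_X(x)P_{Y|X=x}(y)$, the output support is $\mathcal{S}_Y=\{y\in\mathcal{Y}:P_Y(y)>0\}$ and $P_{X|Y=y}(x)=P_{Y|X=x}(y)P_X(x)/P_Y(y)$. The pointwise maximal leakage (PML) of $y\in\mathcal{S}_Y$ is $\ell_{P_{Y|X}\times P_X}(X\to y)=\log\max_{x\in\mathcal{X}}\frac{P_{X|Y=y}(x)}{P_X(x)}$. The entry $u_{ij}=k$ means that the pair $(x_i,y_j)$ yields the $k$-th lowest utility value for input $x_i$ (all utility values for a given input are distinct). *)

(* Defs.v *)
From HB Require Import structures.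
From mathcomp Require Import all_boot all_order all_algebra.
From mathcomp Require Import reals exp.
Set Implicit Arguments. Unset Strict Implicit. Unset Printing Implicit Defensive.
Import Order.TTheory GRing.Theory Num.Theory.
Local Open Scope ring_scope.

Section PML.
Variables (R : realType) (N M : nat).
(* Input alphabet X = 'I_N (x_i), output alphabet Y = 'I_M (y_j). *)
Variable PX : 'I_N -> R.

Definition full_support_pmf := (forall i, 0 < PX i) /\ \sum_i PX i = 1.

(* a privacy mechanism: row-stochastic N x M matrix p_ij = P_{Y|X=x_i}(y_j) *)
Definition mechanism (P : 'I_N -> 'I_M -> R) :=
  (forall i j, 0 <= P i j) /\ (forall i, \sum_j P i j = 1).

Definition PY (P : 'I_N -> 'I_M -> R) (j : 'I_M) : R := \sum_i PX i * P i j.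

Definition supportY (P : 'I_N -> 'I_M -> R) : {set 'I_M} :=
  [set j | 0 < PY P j].

Definition posterior (P : 'I_N -> 'I_M -> R) (i : 'I_N) (j : 'I_M) : R :=
  P i j * PX i / PY P j.

(* pointwise maximal leakage  l(X -> y_j) = log max_x P_{X|Y=y}(x)/P_X(x)
   (the ratios are nonnegative and N > 0, so 0 is a neutral start value) *)
Definition PML (P : 'I_N -> 'I_M -> R) (j : 'I_M) : R :=
  ln (\big[Num.max/0]_i (posterior P i j / PX i)).

(* objective: max_{y in S_Y} PML (PML >= 0 on S_Y, so 0 is neutral) *)
Definition max_PML (P : 'I_N -> 'I_M -> R) : R :=
  \big[Num.max/0]_(j in supportY P) PML P j.

Variables (U : 'I_N -> 'I_M -> nat) (h : nat).

Definition Yplus : {set 'I_M} := [set j | [exists i, (h <= U i j)%N]].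

Definition feasible (P : 'I_N -> 'I_M -> R) :=
  [/\ mechanism P,
      (forall i j, (U i j < h)%N -> P i j = 0) &
      supportY P = Yplus].

Definition Mstar (i : 'I_N) (j : 'I_M) : R :=
  if (U i j < h)%N then 0 else ((M - h + 1)%:R)^-1.

End PML.

Definition utility_rows_perm (N M : nat) (U : 'I_N -> 'I_M -> nat) :=
  forall i : 'I_N, perm_eq [seq U i j | j <- enum 'I_M] (iota 1 M).

(* Main.v *)
Require Import Defs.
From HB Require Import structures.
From mathcomp Require Import all_boot all_order all_algebra.
From mathcomp Require Import reals exp.
From mathcomp Require Import zify ring.
Import Order.TTheory GRing.Theory Num.Theory.
Local Open Scope ring_scope.

Lemma count_iota_ge (h M : nat) : (1 <= h <= M)%N ->
  count (fun x => h <= x)%N (iota 1 M) = (M - h + 1)%N.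
Proof.
move=> /andP[h1 hM].
have -> : M = ((h - 1) + (M - h + 1))%N by lia.
rewrite iotaD count_cat.
have -> : count (fun x => h <= x)%N (iota 1 (h - 1)) = 0%N.
  apply/eqP; rewrite -leqn0 leqNgt -has_count; apply/hasPn => x.
  rewrite mem_iota => /andP[_ hx]; lia.
rewrite add0n.
have -> : (1 + (h - 1) = h)%N by lia.
rewrite (eq_in_count (a2 := predT)) ?count_predT ?size_iota; first lia.
move=> x; rewrite mem_iota => /andP[hx _] /=; exact: hx.
Qed.

Theorem theorem1 (R : realType) (N M : nat) (PX : 'I_N -> R)
    (U : 'I_N -> 'I_M -> nat) (h : nat) :
  full_support_pmf PX ->
  utility_rows_perm U ->
  (1 <= h <= M)%N ->
  feasible PX U h (@Mstar R N M U h) /\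
  (forall P : 'I_N -> 'I_M -> R, feasible PX U h P ->
     max_PML PX (@Mstar R N M U h) <= max_PML PX P).
Proof.
move=> [PXpos PXsum] Uperm hM.
pose MS := @Mstar R N M U h.
set c : R := ((M - h + 1)%:R)^-1.
have cpos : 0 < c by rewrite invr_gt0 ltr0n; lia.
pose S (j : 'I_M) := \sum_(i | (h <= U i j)%N) PX i.
have PYM j : PY PX MS j = c * S j.
  rewrite /PY /S mulr_sumr [RHS]big_mkcond /=; apply: eq_bigr => i _.
  rewrite /MS /Mstar; case: ltnP => /= ?; [rewrite mulr0 | rewrite mulrC] => //.
have Spos j : j \in Yplus U h -> 0 < S j.
  rewrite inE => /existsP[i0 Hi0].
  rewrite /S (bigD1 i0) //= ltr_wpDr ?PXpos //.
  by apply: sumr_ge0 => i _; apply/ltW.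
have S0 j : j \notin Yplus U h -> S j = 0.
  rewrite inE negb_exists => /forallP Hj.
  by rewrite /S big_pred0 // => i; rewrite (negbTE (Hj i)).
have suppM : supportY PX MS = Yplus U h.
  apply/setP => j; rewrite /supportY inE PYM.
  case: (boolP (j \in Yplus U h)) => Hj.
    by rewrite mulr_gt0 // Spos.
  by rewrite S0 // mulr0 ltxx.
have featM : feasible PX U h MS.
  split => //; last by move=> i j Hij; rewrite /MS /Mstar Hij.
  split.
    by move=> i j; rewrite /MS /Mstar; case: ifP => _ //; apply/ltW.
  move=> i.
  rewrite (eq_bigr (fun j => if (h <= U i j)%N then c else 0)); last first.
    by move=> j _; rewrite /MS /Mstar ltnNge; case: (h <= U i j)%N.
  rewrite -big_mkcond sumr_const.
  have -> : #|[pred j | (h <= U i j)%N]| = (M - h + 1)%N.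
    rewrite -(count_iota_ge _ _ hM) -((permP (Uperm i)) (fun x => h <= x)%N) count_map.
    rewrite cardE /enum_mem size_filter count_filter; apply: eq_count => x /=.
    by rewrite andbT.
  by rewrite -(mulr_natr c) /c mulVf // pnatr_eq0; lia.
split => // P [[P0 P1] Pz suppP].
have key j : j \in Yplus U h -> PML PX MS j <= PML PX P j.
  move=> Hj.
  have Sj := Spos j Hj.
  have PYP : 0 < PY PX P j by move: Hj; rewrite -suppP inE.
  set mM := \big[Num.max/0]_i (posterior PX MS i j / PX i).
  set mP := \big[Num.max/0]_i (posterior PX P i j / PX i).
  have ratio Q i : posterior PX Q i j / PX i = Q i j / PY PX Q j.
    by rewrite /posterior [X in X / _]mulrAC mulfK // gt_eqF.
  have mMle : mM <= (S j)^-1.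
    apply: bigmax_le; first by rewrite invr_ge0 ltW.
    move=> i _; rewrite ratio PYM /MS /Mstar; case: ifP => _.
      by rewrite mul0r invr_ge0 ltW.
    rewrite invfM mulrA mulfV ?gt_eqF // mul1r //.
  have mMpos : 0 < mM.
    move: Hj; rewrite inE => /existsP[i0 Hi0].
    apply: (lt_le_trans _ (le_bigmax _ _ i0)).
    rewrite ratio PYM /MS /Mstar ltnNge Hi0 /= invfM mulrA mulfV ?gt_eqF // mul1r.
    by rewrite invr_gt0.
  have mPge : (S j)^-1 <= mP.
    have Hi i : P i j <= mP * PY PX P j.
      rewrite -ler_pdivrMr // -ratio; exact: le_bigmax.
    have : PY PX P j <= S j * (mP * PY PX P j).
      rewrite /PY /S mulr_suml [X in _ <= X]big_mkcond /=; apply: ler_sum => i _.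
      case: leqP => Hu /=.
        by rewrite ler_pM2l ?PXpos.
      by rewrite Pz // mulr0.
    rewrite mulrA -{1}[PY PX P j]mul1r ler_pM2r // => H1.
    have -> : mP = (S j)^-1 * (S j * mP) by rewrite mulrA mulVf ?mul1r // gt_eqF.
    by rewrite -{1}[(S j)^-1]mulr1 ler_pM2l // invr_gt0.
  have mPpos : 0 < mP by apply: lt_le_trans mPge; rewrite invr_gt0.
  rewrite /PML -/mM -/mP ler_ln ?posrE //.
  exact: le_trans mMle mPge.
rewrite /max_PML suppM suppP.
exact: le_bigmax2.
Qed.
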